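(* Let $H\in\mathbb{R}^{n_z\times n_z}$ be symmetric positive definite, $F\in\mathbb{R}^{n_x\times n_z}$, $G\in\mathbb{R}^{n_c\times n_z}$, $S\in\mathbb{R}^{n_c\times n_x}$, $w\in\mathbb{R}^{n_c}$, and assume $\{z: Gz\le Sx+w\}\neq\emptyset$ for every $x\in\mathbb{R}^{n_x}$. Let $\kappa$ be a global Lipschitz constant of this mp-QP, let $\hat{x},x\in\mathbb{R}^{n_x}$, and define $$\mathbb{I}(x)=\mathbb{A}(\hat{x})\cup\big\{j\in\mathbb{A}^c(\hat{x}) : \mathcal{B}(z^*(\hat{x}),\kappa\|x-\hat{x}\|)\not\subseteq\mathcal{Z}_j(x)\big\}.$$ Then $z^*(x,\mathbb{I}(x))=z^*(x)$.
   Context: For a parameter $x$, mp-QP$(x)$ is: minimize $V(z)=\frac12 z^THz+x^TFz$ over $z\in\mathcal{Z}(x)=\{z\in\mathbb{R}^{n_z}: Gz\le Sx+w\}$. $G_j,S_j$ are the $j$-th rows of $G,S$, $w_j$ the $j$-th entry of $w$, and $\mathcal{Z}_j(x)=\{z: G_jz\le S_jx+w_j\}$. For $\mathbb{I}\subseteq\{1,\dots,n_c\}$, $\mathcal{Z}(x,\mathbb{I})=\bigcap_{j\in\mathbb{I}}\mathcal{Z}_j(x)$ ($=\mathbb{R}^{n_z}$ if $\mathbb{I}=\emptyset$) and $z^*(x,\mathbb{I})$ is the unique minimizer of $V$ over $\mathcal{Z}(x,\mathbb{I})$; $z^*(x)=z^*(x,\{1,\dots,n_c\})$. Active set $\mathbb{A}(x)=\{j: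 G_jz^*(x)=S_jx+w_j\}$, inactive set $\mathbb{A}^c(x)=\{j: G_jz^*(x)<S_jx+w_j\}$. A global Lipschitz constant (GLC) is a number $\kappa\in\mathbb{R}$ such that $\|z^*(x_1,\mathbb{I})-z^*(x_2,\mathbb{I})\|\le\kappa\|x_1-x_2\|$ for all $x_1,x_2\in\mathbb{R}^{n_x}$ and all $\mathbb{I}\subseteq\{1,\dots,n_c\}$. $\mathcal{B}(q,r)=\{v:\|v-q\|\le r\}$ (Euclidean norm). When $G_j\neq0$, the condition $\mathcal{B}(z^*(\hat x),\kappa\|x-\hat x\|)\not\subseteq\mathcal{Z}_j(x)$ is equivalent to $\kappa\|x-\hat{x}\|>\frac{w_j+S_jx-G_jz^*(\hat{x})}{\|G_j\|}$ (this is the set computed by the paper's Algorithm 1). *)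

(* Defs.v *)
From HB Require Import structures.
From mathcomp Require Import all_boot all_order all_algebra.
From mathcomp Require Import boolp reals.
Set Implicit Arguments. Unset Strict Implicit. Unset Printing Implicit Defensive.
Import Order.TTheory GRing.Theory Num.Theory.
Local Open Scope ring_scope.

Section MPQP.
Variables (R : realType) (nx nz nc : nat).
Variables (H : 'M[R]_nz) (F : 'M[R]_(nx, nz)) (G : 'M[R]_(nc, nz))
          (S : 'M[R]_(nc, nx)) (w : 'cV[R]_nc).

Definition enorm (n : nat) (v : 'cV[R]_n) : R := Num.sqrt (\sum_i (v i 0) ^+ 2).

Definition ball_in (n : nat) (q : 'cV[R]_n) (r : R) (v : 'cV[R]_n) : Prop :=
  enorm (v - q) <= r.

Definition cost (x : 'cV[R]_nx) (z : 'cV[R]_nz) : R :=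
  2^-1 * (z^T *m H *m z) 0 0 + (x^T *m F *m z) 0 0.

Definition Zj (x : 'cV[R]_nx) (j : 'I_nc) (z : 'cV[R]_nz) : Prop :=
  (G *m z) j 0 <= (S *m x) j 0 + w j 0.

Definition ZI (x : 'cV[R]_nx) (I : {set 'I_nc}) (z : 'cV[R]_nz) : Prop :=
  forall j, j \in I -> Zj x j z.

(* z is the (unique) minimizer of V over Z(x, I), i.e. z = z^*(x, I) *)
Definition is_zstar (x : 'cV[R]_nx) (I : {set 'I_nc}) (z : 'cV[R]_nz) : Prop :=
  ZI x I z /\ forall z', ZI x I z' -> cost x z <= cost x z'.

Definition GLC (kappa : R) : Prop :=
  forall (x1 x2 : 'cV[R]_nx) (I : {set 'I_nc}) (z1 z2 : 'cV[R]_nz),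
    is_zstar x1 I z1 -> is_zstar x2 I z2 ->
    enorm (z1 - z2) <= kappa * enorm (x1 - x2).

Definition active_set (xh : 'cV[R]_nx) (zh : 'cV[R]_nz) : {set 'I_nc} :=
  [set j | (G *m zh) j 0 == (S *m xh) j 0 + w j 0].
Definition inactive_set (xh : 'cV[R]_nx) (zh : 'cV[R]_nz) : {set 'I_nc} :=
  [set j | (G *m zh) j 0 < (S *m xh) j 0 + w j 0].

Definition Iset (kappa : R) (xh : 'cV[R]_nx) (zh : 'cV[R]_nz)
    (x : 'cV[R]_nx) : {set 'I_nc} :=
  active_set xh zh :|:
  [set j in inactive_set xh zh |
     `[< exists v, ball_in zh (kappa * enorm (x - xh)) v /\ ~ Zj x j v >]].

End MPQP.

(* Main.v *)
Require Import Defs.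
From HB Require Import structures.
From mathcomp Require Import all_boot all_order all_algebra.
From mathcomp Require Import boolp reals.
From mathcomp Require Import lra ring.
Import Order.TTheory GRing.Theory Num.Theory.
Local Open Scope ring_scope.

Section Aux.
Variables (R : realType) (nx nz nc : nat).
Variables (H : 'M[R]_nz) (F : 'M[R]_(nx, nz)) (G : 'M[R]_(nc, nz))
          (S : 'M[R]_(nc, nx)) (w : 'cV[R]_nc).
Hypothesis HT : H^T = H.

Lemma quad_sym (a b : 'cV[R]_nz) : (a^T *m H *m b) 0 0 = (b^T *m H *m a) 0 0.
Proof.
have E (M : 'M[R]_1) : M 0 0 = M^T 0 0 by rewrite mxE.
rewrite E.
by rewrite !trmx_mul trmxK HT mulmxA.
Qed.

Lemma cost_line x (z d : 'cV[R]_nz) (t : R) :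
  cost H F x (z + t *: d) = cost H F x z +
    t * ((d^T *m H *m z) 0 0 + (x^T *m F *m d) 0 0) +
    t ^+ 2 * (2^-1 * (d^T *m H *m d) 0 0).
Proof.
rewrite /cost.
have -> : (z + t *: d)^T = z^T + t *: d^T by rewrite linearD /= linearZ.
rewrite !mulmxDl !mulmxDr.
rewrite -!scalemxAl -!scalemxAr.
move: (quad_sym z d).
move: (z^T *m H *m z) (z^T *m H *m d) (d^T *m H *m z) (d^T *m H *m d)
  (x^T *m F *m z) (x^T *m F *m d) => A B C D E K Q.
by rewrite !mxE Q; field.
Qed.

Lemma subE m (A B : 'cV[R]_m) k : (A - B) k 0 = A k 0 - B k 0.
Proof. by rewrite !mxE. Qed.

Lemma Gline j (z d : 'cV[R]_nz) (t : R) :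
  (G *m (z + t *: d)) j 0 = (G *m z) j 0 + t * (G *m d) j 0.
Proof. by rewrite mulmxDr -scalemxAr !mxE. Qed.


Hypothesis PD : forall z : 'cV[R]_nz, z != 0 -> 0 < (z^T *m H *m z) 0 0.

Lemma qnonneg (d : 'cV[R]_nz) : 0 <= (d^T *m H *m d) 0 0.
Proof.
have [->|nd] := eqVneq d 0; last by apply/ltW/PD.
by rewrite mulmx0 mxE.
Qed.

Lemma relax_min xh zh (I : {set 'I_nc}) :
  is_zstar H F G S w xh setT zh -> active_set G S w xh zh \subset I ->
  is_zstar H F G S w xh I zh.
Proof.
move=> [Fz Mz] /subsetP AI; split; first by move=> j _; exact: Fz j (in_setT j).
move=> z' Fz'; rewrite leNgt; apply/negP => Hlt.
set d := z' - zh.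
set s := fun j => (S *m xh) j 0 + w j 0 - (G *m zh) j 0.
set T := \sum_(j in inactive_set G S w xh zh) `|(G *m d) j 0| / s j.
have spos j : j \in inactive_set G S w xh zh -> 0 < s j.
  by rewrite inE /s subr_gt0.
have T0 : 0 <= T.
  by apply: sumr_ge0 => j /spos sj; rewrite divr_ge0 // ltW.
set t := (1 + T)^-1.
have ht : t * (1 + T) = 1 by rewrite mulVf //; apply/lt0r_neq0; lra.
have t0 : 0 < t by rewrite invr_gt0; lra.
have t1 : t <= 1 by nra.
have Fzt : ZI G S w xh setT (zh + t *: d).
  move=> j _; rewrite /Zj Gline.
  have := Fz j (in_setT j); rewrite /Zj le_eqVlt => /orP [/eqP Ha | Hin].
  - have jI : j \in I by apply: AI; rewrite inE Ha eqxx.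
    have := Fz' j jI; rewrite /Zj => Hz'.
    rewrite /d mulmxBr subE Ha; nra.
  - have jin : j \in inactive_set G S w xh zh by rewrite inE.
    have sj := spos j jin.
    have HjT : `|(G *m d) j 0| / s j <= T.
      rewrite /T (bigD1 j) //=; rewrite lerDl.
      by apply: sumr_ge0 => i /andP [/spos si _]; rewrite divr_ge0 // ltW.
    have Hab : `|(G *m d) j 0| <= T * s j by rewrite -ler_pdivrMr.
    have Hn := ler_norm ((G *m d) j 0).
    have : t * (G *m d) j 0 <= t * (T * s j).
      by rewrite ler_pM2l //; apply: le_trans Hn Hab.
    rewrite /s in Hab *; nra.
have Ht := Mz _ Fzt.
have E1 : cost H F xh z' = cost H F xh zh +
    1 * ((d^T *m H *m zh) 0 0 + (xh^T *m F *m d) 0 0) +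
    1 ^+ 2 * (2^-1 * (d^T *m H *m d) 0 0).
  by rewrite -(cost_line xh zh d 1) scale1r addrC subrK.
rewrite cost_line in Ht.
have qd := qnonneg d.
move: Ht E1 Hlt qd; rewrite expr1n !mul1r expr2.
move: (cost H F xh zh) (cost H F xh z') ((d^T *m H *m zh) 0 0 + (xh^T *m F *m d) 0 0)
  ((d^T *m H *m d) 0 0) => c0 c1 a b Ht E1 Hlt qd.
have : t * t * (2^-1 * b) <= t * (2^-1 * b).
  by apply: ler_wpM2r; [rewrite mulr_ge0 // invr_ge0; lra | nra].
nra.
Qed.

Lemma zstar_uniq x (z1 z2 : 'cV[R]_nz) :
  is_zstar H F G S w x setT z1 -> is_zstar H F G S w x setT z2 -> z1 = z2.
Proof.
move=> [F1 M1] [F2 M2].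
set d := z1 - z2.
have Fm : ZI G S w x setT (z2 + 2^-1 *: d).
  move=> j _; rewrite /Zj Gline /d mulmxBr subE.
  have := F1 j (in_setT j); have := F2 j (in_setT j); rewrite /Zj.
  move=> h2 h1; nra.
have Hm := M2 _ Fm.
have c12 := M1 _ F2. have c21 := M2 _ F1.
have E1 : cost H F x z1 = cost H F x z2 +
    1 * ((d^T *m H *m z2) 0 0 + (x^T *m F *m d) 0 0) +
    1 ^+ 2 * (2^-1 * (d^T *m H *m d) 0 0).
  by rewrite -(cost_line x z2 d 1) scale1r addrC subrK.
rewrite cost_line in Hm.
have [d0|nd] := eqVneq d 0; first by apply/eqP; rewrite -subr_eq0 -/d d0.
have qd := PD _ nd.
move: Hm E1 c12 c21 qd; rewrite expr1n !mul1r expr2.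
move: (cost H F x z2) (cost H F x z1) ((d^T *m H *m z2) 0 0 + (x^T *m F *m d) 0 0)
  ((d^T *m H *m d) 0 0) => c0 c1 a b Hm E1 c12 c21 qd; exfalso.
nra.
Qed.

End Aux.
Arguments relax_min {R nx nz nc H F G S w}.
Arguments zstar_uniq {R nx nz nc H F G S w}.
Theorem theorem1 (R : realType) (nx nz nc : nat)
  (H : 'M[R]_nz) (F : 'M[R]_(nx, nz)) (G : 'M[R]_(nc, nz))
  (S : 'M[R]_(nc, nx)) (w : 'cV[R]_nc) :
  H^T = H ->
  (forall z : 'cV[R]_nz, z != 0 -> 0 < (z^T *m H *m z) 0 0) ->
  (forall x : 'cV[R]_nx, exists z : 'cV[R]_nz, ZI G S w x setT z) ->
  forall (kappa : R), GLC H F G S w kappa ->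
  forall (xh x : 'cV[R]_nx) (zh : 'cV[R]_nz),
    is_zstar H F G S w xh setT zh ->
  forall z1 z2 : 'cV[R]_nz,
    is_zstar H F G S w x (Iset G S w kappa xh zh x) z1 ->
    is_zstar H F G S w x setT z2 ->
    z1 = z2.
Proof.
move=> HT PD _ kappa Hglc xh x zh Hzh z1 z2 H1 H2.
set I := Iset G S w kappa xh zh x.
have Hzh' : is_zstar H F G S w xh I zh.
  by apply: (relax_min HT PD xh zh I Hzh); apply: subsetUl.
have B := Hglc x xh I z1 zh H1 Hzh'.
have F1 : ZI G S w x setT z1.
  move=> j _; case: (boolP (j \in I)) => [jI|jnI]; first exact: H1.1 j jI.
  move: jnI; rewrite /I /Iset inE negb_or => /andP [nA nB].
  have jin : j \in inactive_set G S w xh zh.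
    rewrite inE lt_neqAle; rewrite inE in nA; rewrite nA /=.
    exact: Hzh.1 j (in_setT j).
  rewrite inE jin /= in nB.
  apply: contrapT => nzj; move/negP: nB; apply; apply/asboolP.
  by exists z1; split.
apply: (zstar_uniq HT PD x z1 z2 _ H2); split => // z' Fz'.
by apply: H1.2 => j _; exact: Fz' j (in_setT j).
Qed.
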